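(* Let $P$ be a convex polygon, let $\mathcal{R}$ be the smallest axis-parallel rectangle containing $P$, with side lengths $L\ge W>0$, and let $r=\frac14\sqrt{L^2+4W^2}$. Suppose that $P$ has three vertices forming a triangle such that one of these vertices coincides with a corner of $\mathcal{R}$ and the other two lie respectively on the two sides of $\mathcal{R}$ not incident to that corner. Then $r\le 2\,r_{opt}(P)$.
   Context: For a compact set $X\subset\mathbb{R}^2$, $r_{opt}(X)$ denotes the minimum $r$ such that two closed disks of radius $r$ have union containing $X$. The number $r$ is the radius of the two congruent disks circumscribing the two halves $\frac L2\times W$ of $\mathcal{R}$. *)

(* Defs.v *)
From HB Require Import structures.
From mathcomp Require Import all_boot all_order all_algebra.
From mathcomp Require Import all_classical all_reals.
Set Implicit Arguments. Unset Strict Implicit. Unset Printing Implicit Defensive.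
Import Order.TTheory GRing.Theory Num.Theory.
Local Open Scope ring_scope.
Local Open Scope classical_set_scope.

Section Defs.
Variable R : realType.
Definition pt := (R * R)%type.

Definition conv_hull (n : nat) (v : 'I_n -> pt) : set pt :=
  [set p | exists w : 'I_n -> R,
     (forall i, 0 <= w i) /\ \sum_(i < n) w i = 1 /\
     p.1 = \sum_(i < n) w i * (v i).1 /\ p.2 = \sum_(i < n) w i * (v i).2].

Definition is_vertex (P : set pt) (x : pt) : Prop :=
  P x /\ forall y z (t : R), P y -> P z -> 0 < t < 1 ->
    x = (t * y.1 + (1 - t) * z.1, t * y.2 + (1 - t) * z.2) -> y = z.

Definition rect (a b c d : R) : set pt :=
  [set p | a <= p.1 <= b /\ c <= p.2 <= d].

Definition is_bbox (P : set pt) (a b c d : R) : Prop :=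
  P `<=` rect a b c d /\
  forall a' b' c' d', P `<=` rect a' b' c' d' -> rect a b c d `<=` rect a' b' c' d'.

Definition disk (c : pt) (r : R) : set pt :=
  [set p | (p.1 - c.1) ^+ 2 + (p.2 - c.2) ^+ 2 <= r ^+ 2].

Definition r_opt (X : set pt) : R :=
  inf [set r : R | 0 <= r /\ exists c1 c2 : pt, X `<=` disk c1 r `|` disk c2 r].

Definition noncollinear (p q s : pt) : Prop :=
  (q.1 - p.1) * (s.2 - p.2) - (q.2 - p.2) * (s.1 - p.1) != 0.
End Defs.

(* Main.v *)
Require Import Defs.
From HB Require Import structures.
From mathcomp Require Import all_boot all_order all_algebra.
From mathcomp Require Import all_classical all_reals.
From mathcomp Require Import ring lra.
Import Order.TTheory GRing.Theory Num.Theory.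
Local Open Scope ring_scope.
Local Open Scope classical_set_scope.

Lemma certC (R : realFieldType) (X Y s t : R) : 0 <= Y -> Y <= X ->
  (X^+2+4*Y^+2)/16 <= (X^+2+s^+2)/10 + (t^+2+Y^+2)/10 + ((X-t)^+2+(s-Y)^+2)/5.
Proof.
move=> h0 h.
have h1 : 0 <= (t - 2*X/3)^+2 by apply: sqr_ge0.
have h2 : 0 <= (s - 2*Y/3)^+2 by apply: sqr_ge0.
have h3 : 0 <= (X - Y) * (X + Y).
  by apply: mulr_ge0; lra.
nra.
Qed.

Lemma certD (R : realFieldType) (X Y s t : R) : 0 <= Y -> Y <= X ->
  (X^+2+4*Y^+2)/8 <= ((X-t/2)^+2+(s-Y/2)^+2) + ((t-X/2)^+2+(Y-s/2)^+2).
Proof.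
move=> h0 h.
have h1 : 0 <= (t - 4*X/5)^+2 by apply: sqr_ge0.
have h2 : 0 <= (s - 4*Y/5)^+2 by apply: sqr_ge0.
have h3 : 0 <= X^+2 by apply: sqr_ge0.
have h4 : 0 <= (X - Y) * (X + Y) by apply: mulr_ge0; lra.
nra.
Qed.

Lemma core0 (R : realFieldType) (X Y s t e : R) (b2 b3 b4 b5 : bool) :
  0 <= s -> s <= Y -> Y <= X -> 0 <= t -> t <= X ->
  (false == b2 -> X^+2+s^+2 <= e) ->
  (false == b3 -> t^+2+Y^+2 <= e) ->
  (false == b4 -> (X^+2+s^+2)/4 <= e) ->
  (false == b5 -> (t^+2+Y^+2)/4 <= e) ->
  (b2 == b3 -> (X-t)^+2+(s-Y)^+2 <= e) ->
  (b2 == b4 -> (X^+2+s^+2)/4 <= e) ->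
  (b2 == b5 -> (X-t/2)^+2+(s-Y/2)^+2 <= e) ->
  (b3 == b4 -> (t-X/2)^+2+(Y-s/2)^+2 <= e) ->
  (b3 == b5 -> (t^+2+Y^+2)/4 <= e) ->
  (b4 == b5 -> ((X-t)^+2+(s-Y)^+2)/4 <= e) ->
  X^+2+4*Y^+2 <= 16*e.
Proof.
move=> hs0 hsY hYX ht0 htX.
have hY0 : 0 <= Y by lra.
have hC := @certC R X Y s t hY0 hYX.
have hD := @certD R X Y s t hY0 hYX.
have hXY : Y^+2 <= X^+2 by rewrite ler_sqr ?nnegrE; lra.
have hs2 : 0 <= s^+2 by apply: sqr_ge0.
have ht2 : 0 <= t^+2 by apply: sqr_ge0.
have h23 : 0 <= (X-t)^+2+(s-Y)^+2 by apply: addr_ge0; apply: sqr_ge0.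
case: b2; case: b3; case: b4; case: b5 => /= h12 h13 h14 h15 h23' h24 h25 h34 h35 h45;
repeat match goal with H : is_true (?a == ?a) -> _ |- _ => specialize (H (eqxx a)) end;
lra.
Qed.

Ltac fld := field; try (by rewrite pnatr_eq0).

Section Geo.
Variable R : realType.

Definition d2 (p q : pt R) : R := (p.1 - q.1)^+2 + (p.2 - q.2)^+2.
Definition mid (p q : pt R) : pt R := ((p.1 + q.1)/2, (p.2 + q.2)/2).

Lemma disk_d2 (c p q : pt R) (r : R) : disk c r p -> disk c r q -> d2 p q <= 4 * r^+2.
Proof.
rewrite /disk /d2 /=.
have -> : p.1 - q.1 = (p.1 - c.1) - (q.1 - c.1) by ring.
have -> : p.2 - q.2 = (p.2 - c.2) - (q.2 - c.2) by ring.
move: (p.1 - c.1) (q.1 - c.1) (p.2 - c.2) (q.2 - c.2) => x1 x2 y1 y2 h1 h2.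
have e1 : 0 <= (x1 + x2)^+2 by apply: sqr_ge0.
have e2 : 0 <= (y1 + y2)^+2 by apply: sqr_ge0.
nra.
Qed.

Arguments disk_d2 {c p q r}.

Lemma same_d2 (c1 c2 p q : pt R) (r : R) :
  (disk c1 r `|` disk c2 r) p -> (disk c1 r `|` disk c2 r) q ->
  `[< disk c1 r p >] == `[< disk c1 r q >] -> d2 p q <= 4 * r^+2.
Proof.
move=> hp hq.
case: (pselect (disk c1 r p)) => Hp;
  [rewrite (asboolT Hp) | rewrite (asboolF Hp)];
case: (pselect (disk c1 r q)) => Hq;
  [rewrite (asboolT Hq) | rewrite (asboolF Hq) | rewrite (asboolT Hq) | rewrite (asboolF Hq)] => //= _.
- exact: (disk_d2 Hp Hq).
- case: hp => hp; first by case: Hp.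
  case: hq => hq; first by case: Hq.
  exact: (disk_d2 hp hq).
Qed.

Arguments same_d2 {c1 c2 p q r}.

Lemma geom (q1 q2 q3 q4 q5 c1 c2 : pt R) (X Y s t r : R) :
  0 <= s -> s <= Y -> Y <= X -> 0 <= t -> t <= X ->
  d2 q1 q2 = X^+2+s^+2 ->
  d2 q1 q3 = t^+2+Y^+2 ->
  d2 q1 q4 = (X^+2+s^+2)/4 ->
  d2 q1 q5 = (t^+2+Y^+2)/4 ->
  d2 q2 q3 = (X-t)^+2+(s-Y)^+2 ->
  d2 q2 q4 = (X^+2+s^+2)/4 ->
  d2 q2 q5 = (X-t/2)^+2+(s-Y/2)^+2 ->
  d2 q3 q4 = (t-X/2)^+2+(Y-s/2)^+2 ->
  d2 q3 q5 = (t^+2+Y^+2)/4 ->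
  d2 q4 q5 = ((X-t)^+2+(s-Y)^+2)/4 ->
  (disk c1 r `|` disk c2 r) q1 ->
  (disk c1 r `|` disk c2 r) q2 ->
  (disk c1 r `|` disk c2 r) q3 ->
  (disk c1 r `|` disk c2 r) q4 ->
  (disk c1 r `|` disk c2 r) q5 ->
  X^+2+4*Y^+2 <= 16*(4 * r^+2).
Proof.
move=> hs0 hsY hYX ht0 htX e12 e13 e14 e15 e23 e24 e25 e34 e35 e45 H1 H2 H3 H4 H5.
set b1 := `[< disk c1 r q1 >].
set b2 := `[< disk c1 r q2 >].
set b3 := `[< disk c1 r q3 >].
set b4 := `[< disk c1 r q4 >].
set b5 := `[< disk c1 r q5 >].
have F : forall x y : bool, (false == (x != y)) = (x == y) by case; case.
have G : forall x y z : bool, ((x != y) == (x != z)) = (y == z) by case; case; case.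
apply: (@core0 _ X Y s t _ (b1 != b2) (b1 != b3) (b1 != b4) (b1 != b5)) => //;
  rewrite ?F ?G => h.
- by rewrite -e12; exact: (same_d2 H1 H2 h).
- by rewrite -e13; exact: (same_d2 H1 H3 h).
- by rewrite -e14; exact: (same_d2 H1 H4 h).
- by rewrite -e15; exact: (same_d2 H1 H5 h).
- by rewrite -e23; exact: (same_d2 H2 H3 h).
- by rewrite -e24; exact: (same_d2 H2 H4 h).
- by rewrite -e25; exact: (same_d2 H2 H5 h).
- by rewrite -e34; exact: (same_d2 H3 H4 h).
- by rewrite -e35; exact: (same_d2 H3 H5 h).
- by rewrite -e45; exact: (same_d2 H4 H5 h).
Qed.


Lemma hull_mid (n : nat) (v : 'I_n -> pt R) (p q : pt R) :
  conv_hull v p -> conv_hull v q -> conv_hull v (mid p q).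
Proof.
move=> [w [w0 [w1 [wx wy]]]] [w' [w0' [w1' [wx' wy']]]].
exists (fun i => (w i + w' i) / 2); split.
  by move=> i; have := w0 i; have := w0' i; lra.
split.
  rewrite -mulr_suml big_split /= w1 w1'; lra.
split.
  rewrite /mid /= wx wx' -big_split /= mulr_suml; apply: eq_bigr => i _; ring.
rewrite /mid /= wy wy' -big_split /= mulr_suml; apply: eq_bigr => i _; ring.
Qed.

Lemma d2_eq (sg tg u w : R) (p q : pt R) : sg^+2 = 1 -> tg^+2 = 1 ->
  p.1 - q.1 = sg * u -> p.2 - q.2 = tg * w -> d2 p q = u^+2 + w^+2.
Proof.
move=> hs ht e1 e2; rewrite /d2 e1 e2 !exprMn hs ht !mul1r //.
Qed.

End Geo.

Arguments hull_mid {R n v p q}.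
Arguments mid {R}.
Arguments d2_eq {R sg tg u w p q}.
Arguments d2 {R}.
Arguments geom {R q1 q2 q3 q4 q5 c1 c2 X Y s t r}.


Theorem lemma2 (R : realType) (n : nat) (v : 'I_n -> pt R)
  (a b c d L W : R) (p1 p2 p3 : pt R) :
  is_bbox (conv_hull v) a b c d ->
  ((L = b - a /\ W = d - c) \/ (L = d - c /\ W = b - a)) ->
  W <= L -> 0 < W ->
  is_vertex (conv_hull v) p1 -> is_vertex (conv_hull v) p2 ->
  is_vertex (conv_hull v) p3 -> noncollinear p1 p2 p3 ->
  ((p1.1 = a /\ p2.1 = b) \/ (p1.1 = b /\ p2.1 = a)) ->
  ((p1.2 = c /\ p3.2 = d) \/ (p1.2 = d /\ p3.2 = c)) ->
  Num.sqrt (L ^+ 2 + 4 * W ^+ 2) / 4 <= 2 * r_opt (conv_hull v).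
Proof.
move=> [hsub _] hLW hWL hW [hp1 _] [hp2 _] [hp3 _] _ hx hy.
have inR : forall p, conv_hull v p -> (a <= p.1 <= b) /\ (c <= p.2 <= d).
  by move=> p /hsub.
have [/andP[ha1 hb1] /andP[hc1 hd1]] := inR _ hp1.
have [/andP[ha2 hb2] /andP[hc2 hd2]] := inR _ hp2.
have [/andP[ha3 hb3] /andP[hc3 hd3]] := inR _ hp3.
have hm2 := hull_mid hp1 hp2.
have hm3 := hull_mid hp1 hp3.
have [sg [hsg [ex2 [t [ex3 [ht0 htX]]]]]] : exists sg : R, sg^+2 = 1 /\
    p2.1 = p1.1 + sg * (b - a) /\ exists t, p3.1 = p1.1 + sg * t /\ 0 <= t /\ t <= b - a.
  case: hx => [[e1 e2]|[e1 e2]].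
    exists 1; split; first by rewrite expr1n.
    split; first by rewrite e1 e2 mul1r; ring.
    exists (p3.1 - a); rewrite e1 mul1r; split; [ring | lra].
  exists (-1); split; first by rewrite sqrrN expr1n.
  split; first by rewrite e1 e2; ring.
  exists (b - p3.1); rewrite e1; split; [ring | lra].
have [tg [htg [ey3 [s [ey2 [hs0 hsY]]]]]] : exists tg : R, tg^+2 = 1 /\
    p3.2 = p1.2 + tg * (d - c) /\ exists s, p2.2 = p1.2 + tg * s /\ 0 <= s /\ s <= d - c.
  case: hy => [[e1 e2]|[e1 e2]].
    exists 1; split; first by rewrite expr1n.
    split; first by rewrite e1 e2 mul1r; ring.
    exists (p2.2 - c); rewrite e1 mul1r; split; [ring | lra].
  exists (-1); split; first by rewrite sqrrN expr1n.
  split; first by rewrite e1 e2; ring.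
  exists (d - p2.2); rewrite e1; split; [ring | lra].
set X := b - a in ex2 ex3 htX hLW *.
set Y := d - c in ey2 ey3 hsY hLW *.
have hX : 0 <= X by rewrite /X; lra.
have hY : 0 <= Y by rewrite /Y; lra.
set N2 := mid p1 p2 in hm2 *.
set N3 := mid p1 p3 in hm3 *.
have D : forall (p q : pt R) (u w T : R), p.1 - q.1 = sg * u -> p.2 - q.2 = tg * w ->
    u^+2 + w^+2 = T -> d2 p q = T.
  by move=> p q u w T e1 e2 <-; exact: (d2_eq hsg htg e1 e2).
have key : forall r : R, 0 <= r -> forall c1 c2 : pt R,
    conv_hull v `<=` disk c1 r `|` disk c2 r ->
    L^+2 + 4 * W^+2 <= 16 * (4 * r^+2).
  move=> r hr c1 c2 hcov.
  have H1 := hcov _ hp1; have H2 := hcov _ hp2; have H3 := hcov _ hp3.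
  have H4 := hcov _ hm2; have H5 := hcov _ hm3.
  have eN2 : N2 = ((p1.1+p2.1)/2, (p1.2+p2.2)/2) by [].
  have eN3 : N3 = ((p1.1+p3.1)/2, (p1.2+p3.2)/2) by [].
  have e12 : d2 p1 p2 = X^+2+s^+2 by
    apply: (D _ _ (-X) (-s)); [rewrite ex2; ring | rewrite ey2; ring | ring].
  have e13 : d2 p1 p3 = t^+2+Y^+2 by
    apply: (D _ _ (-t) (-Y)); [rewrite ex3; ring | rewrite ey3; ring | ring].
  have e14 : d2 p1 N2 = (X^+2+s^+2)/4 by
    apply: (D _ _ (-X/2) (-s/2)); [rewrite eN2 /= ex2; fld | rewrite eN2 /= ey2; fld | fld].
  have e15 : d2 p1 N3 = (t^+2+Y^+2)/4 by
    apply: (D _ _ (-t/2) (-Y/2)); [rewrite eN3 /= ex3; fld | rewrite eN3 /= ey3; fld | fld].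
  have e23 : d2 p2 p3 = (X-t)^+2+(s-Y)^+2 by
    apply: (D _ _ (X-t) (s-Y)); [rewrite ex2 ex3; ring | rewrite ey2 ey3; ring | ring].
  have e24 : d2 p2 N2 = (X^+2+s^+2)/4 by
    apply: (D _ _ (X/2) (s/2)); [rewrite eN2 /= ex2; fld | rewrite eN2 /= ey2; fld | fld].
  have e25 : d2 p2 N3 = (X-t/2)^+2+(s-Y/2)^+2 by
    apply: (D _ _ (X-t/2) (s-Y/2)); [rewrite eN3 /= ex2 ex3; fld | rewrite eN3 /= ey2 ey3; fld | fld].
  have e34 : d2 p3 N2 = (t-X/2)^+2+(Y-s/2)^+2 by
    apply: (D _ _ (t-X/2) (Y-s/2)); [rewrite eN2 /= ex2 ex3; fld | rewrite eN2 /= ey2 ey3; fld | fld].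
  have e35 : d2 p3 N3 = (t^+2+Y^+2)/4 by
    apply: (D _ _ (t/2) (Y/2)); [rewrite eN3 /= ex3; fld | rewrite eN3 /= ey3; fld | fld].
  have e45 : d2 N2 N3 = ((X-t)^+2+(s-Y)^+2)/4 by
    apply: (D _ _ ((X-t)/2) ((s-Y)/2)); [rewrite eN2 eN3 /= ex2 ex3; fld | rewrite eN2 eN3 /= ey2 ey3; fld | fld].
  have f12 : d2 p1 p3 = Y^+2+t^+2 by
    apply: (D _ _ (-t) (-Y)); [rewrite ex3; ring | rewrite ey3; ring | ring].
  have f13 : d2 p1 p2 = s^+2+X^+2 by
    apply: (D _ _ (-X) (-s)); [rewrite ex2; ring | rewrite ey2; ring | ring].
  have f14 : d2 p1 N3 = (Y^+2+t^+2)/4 by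
    apply: (D _ _ (-t/2) (-Y/2)); [rewrite eN3 /= ex3; fld | rewrite eN3 /= ey3; fld | fld].
  have f15 : d2 p1 N2 = (s^+2+X^+2)/4 by
    apply: (D _ _ (-X/2) (-s/2)); [rewrite eN2 /= ex2; fld | rewrite eN2 /= ey2; fld | fld].
  have f23 : d2 p3 p2 = (Y-s)^+2+(t-X)^+2 by
    apply: (D _ _ (t-X) (Y-s)); [rewrite ex2 ex3; ring | rewrite ey2 ey3; ring | ring].
  have f24 : d2 p3 N3 = (Y^+2+t^+2)/4 by
    apply: (D _ _ (t/2) (Y/2)); [rewrite eN3 /= ex3; fld | rewrite eN3 /= ey3; fld | fld].
  have f25 : d2 p3 N2 = (Y-s/2)^+2+(t-X/2)^+2 by
    apply: (D _ _ (t-X/2) (Y-s/2)); [rewrite eN2 /= ex2 ex3; fld | rewrite eN2 /= ey2 ey3; fld | fld].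
  have f34 : d2 p2 N3 = (s-Y/2)^+2+(X-t/2)^+2 by
    apply: (D _ _ (X-t/2) (s-Y/2)); [rewrite eN3 /= ex2 ex3; fld | rewrite eN3 /= ey2 ey3; fld | fld].
  have f35 : d2 p2 N2 = (s^+2+X^+2)/4 by
    apply: (D _ _ (X/2) (s/2)); [rewrite eN2 /= ex2; fld | rewrite eN2 /= ey2; fld | fld].
  have f45 : d2 N3 N2 = ((Y-s)^+2+(t-X)^+2)/4 by
    apply: (D _ _ ((t-X)/2) ((Y-s)/2)); [rewrite eN2 eN3 /= ex2 ex3; fld | rewrite eN2 eN3 /= ey2 ey3; fld | fld].
  have [hYX|hXY] := lerP Y X.
    have := geom hs0 hsY hYX ht0 htX e12 e13 e14 e15 e23 e24 e25 e34 e35 e45 H1 H2 H3 H4 H5.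
    case: hLW => [[-> ->]|[eL eW]] //.
    rewrite eL eW in hWL *.
    have -> : X = Y by lra.
    by [].
  have hXY' : X <= Y by lra.
  have := geom ht0 htX hXY' hs0 hsY f12 f13 f14 f15 f23 f24 f25 f34 f35 f45 H1 H3 H2 H5 H4.
  case: hLW => [[eL eW]|[-> ->]] //.
  rewrite eL eW in hWL *.
  have -> : X = Y by lra.
  by [].
have hL0 : 0 <= L^+2 + 4 * W^+2 by apply: addr_ge0; [apply: sqr_ge0 | apply: mulr_ge0; [lra | apply: sqr_ge0]].
suff : Num.sqrt (L ^+ 2 + 4 * W ^+ 2) / 8 <= r_opt (conv_hull v) by lra.
rewrite /r_opt; apply: lb_le_inf.
  exists (X + Y); split; first by lra.
  exists (a, c), (a, c) => p hp; left.
  have [/andP[h1 h2] /andP[h3 h4]] := inR _ hp.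
  rewrite /disk /=.
  have e1 : 0 <= p.1 - a by lra.
  have e2 : 0 <= p.2 - c by lra.
  have e3 : p.1 - a <= X by rewrite /X; lra.
  have e4 : p.2 - c <= Y by rewrite /Y; lra.
  nra.
move=> r [hr [c1 [c2 hcov]]].
have hk := key r hr c1 c2 hcov.
have : Num.sqrt (L ^+ 2 + 4 * W ^+ 2) <= Num.sqrt ((8 * r)^+2).
  by rewrite ler_sqrt ?sqr_ge0 //; rewrite exprMn; lra.
rewrite sqrtr_sqr ger0_norm; last by lra.
lra.
Qed.
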